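(* Let $\mathbb{V}$ be a BIT speciale variety with signature $\mathcal{F}$ and BIT speciale terms $0,\alpha_1,\dots,\alpha_n,\theta$, let $A$ be a $\mathbb{V}$-algebra and $H$ a non-empty subset of $A$. For an operation $\tau$ of arity $k$, elements $a_1,\dots,a_k\in A$ and $1\le i\le n$, consider the conditions (A) $\alpha_i\big(\tau(\theta(h_{11},\dots,h_{1n},a_1),\dots,\theta(h_{k1},\dots,h_{kn},a_k)),\tau(a_1,\dots,a_k)\big)\in H$ for all $h_{rs}\in H$; (B) $\alpha_i(\theta(h_1,\dots,h_n,a),\theta(h'_1,\dots,h'_n,a))\in H$ for all $a\in A$ and all $h_1,\dots,h_n,h'_1,\dots,h'_n\in H$; (C$_j$) $\alpha_i\big(\tau(a_1,\dots,a_{j-1},\theta(h_1,\dots,h_n,a_j),a_{j+1},\dots,a_k),\tau(a_1,\dots,a_k)\big)\in H$ for all $h_1,\dots,h_n\in H$ (where $1\le j\le k$). Then the following are equivalent: (i) $H$ is an ideal of $A$; (ii) $H$ is closed under $\theta$ and under each $\alpha_i$ ($1\le i\le n$), and (A) holds for every $\tau\in\mathcal{F}\cup\{\theta\}$, every $1\le i\le n$ and all $a_1,\dots,a_k\in A$; (iii) $0\in H$, $H$ is closed under $\theta$ and under $\alpha_i(-,0)$ for each $i$, and (A) holds for every $\tau\in\mathcal{F}\cup\{\theta\}\cup\{\alpha_j\mid1\le j\le n\}$, every $1\le i\le n$ and all $a_1,\dots,a_k\in A$; (iv) $H$ is closed under $\theta$ and under $\alpha_i(-,0)$ for each $i$,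 (A) holds for every $\tau\in\mathcal{F}$, every $1\le i\le n$ and all $a_1,\dots,a_k\in A$, and (B) holds for every $1\le i\le n$; (v) $H$ is closed under $\theta$ and under $\alpha_i(-,0)$ for each $i$, (B) holds for every $1\le i\le n$, and (C$_j$) holds for every $\tau\in\mathcal{F}$ of arity $k$, all $a_1,\dots,a_k\in A$ and all $1\le i\le n$, $1\le j\le k$; (vi) $0\in H$, $H$ is closed under $\theta$ and under $\alpha_i(-,0)$ for each $i$, for every $a\in A$ the $\sim_H$-class of $a$ equals $\theta(H,\dots,H,a)$, and (C$_j$) holds for every $\tau\in\mathcal{F}$ of arity $k$, all $a_1,\dots,a_k\in A$ and all $1\le i\le n$, $1\le j\le k$; (vii) $\sim_H$ is a congruence on $A$ and $H$ is its kernel (its class containing $0$). Moreover, if $\mathbb{V}$ is semi-abelian, then the equivalences remain valid when, in (ii), ''closed under $\theta$ and each $\alpha_i$'', in (iii), ''$0\in H$ and closed under $\theta$ and each $\alpha_i(-,0)$'', and in (iv) and (v), ''closed under $\theta$ and each $\alpha_i(-,0)$'' are replaced by ''$H$ is a subalgebra of $A$''.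
   Context: $\mathbb{V}$ is a variety with signature $\mathcal{F}$ (finitary operation symbols, constants being 0-ary). BIT speciale: the algebraic theory of $\mathbb{V}$ contains a constant $0$ and, for some $n\ge1$, binary terms $\alpha_1,\dots,\alpha_n$ and an $(n+1)$-ary term $\theta$ with identities $\alpha_i(x,x)=0$ and $\theta(\alpha_1(x,y),\dots,\alpha_n(x,y),y)=x$. Semi-abelian means (equivalently) BIT speciale with $0$ the only constant of the algebraic theory. An ideal term in variables $y_1,\dots,y_p$ is a term $t(x_1,\dots,x_m,y_1,\dots,y_p)$ with $t(x_1,\dots,x_m,0,\dots,0)=0$ an identity of $\mathbb{V}$; a non-empty $H\subseteq A$ is an ideal if $t(a_1,\dots,a_m,b_1,\dots,b_p)\in H$ for every ideal term $t$, all $a_r\in A$, $b_s\in H$. Notation: $\theta(H,\dots,H,a)=\{\theta(h_1,\dots,h_n,a)\mid h_1,\dots,h_n\in H\}$. For $a,b\in A$, $a\sim_H b$ iff $\theta(H,\dots,H,a)=\theta(H,\dots,H,b)$; this is an equivalence relation. ''Closed under $\theta$'' means $\theta(h_1,\dots,h_{n+1})\in H$ for all $h_r\in H$; ''closed under $\alpha_i$'' means $\alpha_i(h,h')\in H$ for all $h,h'\in H$; ''closed under $\alpha_i(-,0)$'' means $\alpha_i(h,0)\in H$ for all $h\in H$. When $\tau$ is a constant ($k=0$), condition (A) reads $\alpha_i(\tau,\tau)\in H$. *)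

(* Defs.v *)
From HB Require Import structures.
From mathcomp Require Import all_boot.
Set Implicit Arguments.
Unset Strict Implicit.
Unset Printing Implicit Defensive.

Section UniversalAlgebra.
Variables (F : Type) (ar : F -> nat).

Inductive term : Type :=
| Var : nat -> term
| App (f : F) (ts : 'I_(ar f) -> term) : term.

Record algebra : Type := Algebra {
  carrier :> Type;
  op : forall f : F, ('I_(ar f) -> carrier) -> carrier }.
Arguments op a f _ : clear implicits.

Fixpoint eval (A : algebra) (v : nat -> A) (t : term) : A :=
  match t with
  | Var j => v j
  | App f ts => op A f (fun i => eval v (ts i))
  end.

Fixpoint vars_lt (m : nat) (t : term) : Prop :=
  match t with
  | Var j => j < m
  | App f ts => forall i, vars_lt m (ts i)
  end.

Definition closed_term (t : term) : Prop := vars_lt 0 t.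

Fixpoint subst (s : nat -> term) (t : term) : term :=
  match t with
  | Var j => s j
  | App f ts => App (fun i => subst s (ts i))
  end.

(* A variety is presented by a set E of defining equations; its algebras are
   the models of E, and its identities are the equations valid in all models. *)
Definition model (E : term -> term -> Prop) (A : algebra) : Prop :=
  forall s t, E s t -> forall v : nat -> A, eval v s = eval v t.

Definition identity (E : term -> term -> Prop) (s t : term) : Prop :=
  forall B : algebra, model E B -> forall v : nat -> B, eval v s = eval v t.

Section BIT.
Variables (E : term -> term -> Prop) (n : nat)
          (zero : term) (alpha : 'I_n -> term) (theta : term).

(* 0 is a constant (closed term), alpha_i binary terms in x = x_0, y = x_1,
   theta an (n+1)-ary term in x_0, ..., x_n; plus the BIT speciale identities. *)
Definition is_BIT : Prop :=
  0 < n /\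
  [/\ closed_term zero,
      (forall i, vars_lt 2 (alpha i)), vars_lt n.+1 theta,
      (forall i, identity E (subst (fun _ => Var 0) (alpha i)) zero)
    & identity E (subst (fun j => oapp alpha (Var 1) (insub j : option 'I_n)) theta)
                 (Var 0)].

Definition is_semi_abelian : Prop :=
  is_BIT /\ forall c, closed_term c -> identity E c zero.

Section InAlgebra.
Variables (A : algebra) (H : A -> Prop).

Definition zeroA (x : A) : A := eval (fun _ => x) zero.
(* zero is closed, so zeroA x does not depend on x; it is "0" in A *)
Definition alphaA (i : 'I_n) (x y : A) : A :=
  eval (fun j => if j == 0 then x else y) (alpha i).
Definition thetaA (h : 'I_n -> A) (a : A) : A :=
  eval (fun j => oapp h a (insub j : option 'I_n)) theta.

Definition thetaOp (a : 'I_n.+1 -> A) : A :=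
  thetaA (fun s => a (widen_ord (leqnSn n) s)) (a ord_max).
Definition alphaOp (j : 'I_n) (a : 'I_2 -> A) : A :=
  alphaA j (a ord0) (a ord_max).

Definition inH (h : 'I_n -> A) : Prop := forall s, H (h s).

Definition ideal : Prop :=
  (exists h, H h) /\
  forall (m p : nat) (t : term), vars_lt (m + p) t ->
    identity E (subst (fun j => if j < m then Var j else zero) t) zero ->
    forall v : nat -> A, (forall j, m <= j < m + p -> H (v j)) -> H (eval v t).

Definition closed_theta : Prop :=
  forall h a, inH h -> H a -> H (thetaA h a).
Definition closed_alpha (i : 'I_n) : Prop :=
  forall x y, H x -> H y -> H (alphaA i x y).
Definition closed_alpha0 (i : 'I_n) : Prop :=
  forall x, H x -> H (alphaA i x (zeroA x)).
Definition zero_in : Prop := forall x, H (zeroA x).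
Definition subalgebra : Prop :=
  forall f (a : 'I_(ar f) -> A), (forall r, H (a r)) -> H (op A f a).

Definition condA (k : nat) (tau : ('I_k -> A) -> A) (a : 'I_k -> A) (i : 'I_n) : Prop :=
  forall hs : 'I_k -> 'I_n -> A, (forall r, inH (hs r)) ->
    H (alphaA i (tau (fun r => thetaA (hs r) (a r))) (tau a)).

Definition condB (i : 'I_n) : Prop :=
  forall a h h', inH h -> inH h' -> H (alphaA i (thetaA h a) (thetaA h' a)).

Definition condC (k : nat) (tau : ('I_k -> A) -> A) (a : 'I_k -> A)
    (i : 'I_n) (j : 'I_k) : Prop :=
  forall h, inH h ->
    H (alphaA i (tau (fun r => if r == j then thetaA h (a j) else a r)) (tau a)).

Definition thetaSet (a : A) (x : A) : Prop := exists2 h, inH h & x = thetaA h a.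
Definition simH (a b : A) : Prop := forall x, thetaSet a x <-> thetaSet b x.

Definition is_congruence (R : A -> A -> Prop) : Prop :=
  [/\ (forall a, R a a), (forall a b, R a b -> R b a),
      (forall a b c, R a b -> R b c -> R a c)
    & forall f (a b : 'I_(ar f) -> A), (forall r, R (a r) (b r)) -> R (op A f a) (op A f b)].

Definition condA_F : Prop := forall f a i, condA (op A f) a i.
Definition condA_theta : Prop := forall a i, condA thetaOp a i.
Definition condA_alpha : Prop := forall j a i, condA (alphaOp j) a i.
Definition condB_all : Prop := forall i, condB i.
Definition condC_F : Prop := forall f a i j, condC (op A f) a i j.

Definition cond_ii : Prop :=
  [/\ closed_theta, (forall i, closed_alpha i), condA_F & condA_theta].
Definition cond_iii : Prop :=
  zero_in /\
  [/\ closed_theta, (forall i, closed_alpha0 i), condA_F, condA_theta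
    & condA_alpha].
Definition cond_iv : Prop :=
  [/\ closed_theta, (forall i, closed_alpha0 i), condA_F & condB_all].
Definition cond_v : Prop :=
  [/\ closed_theta, (forall i, closed_alpha0 i), condB_all & condC_F].
Definition cond_vi : Prop :=
  [/\ zero_in, closed_theta, (forall i, closed_alpha0 i),
      (forall a x, simH x a <-> thetaSet a x) & condC_F].
Definition cond_vii : Prop :=
  is_congruence simH /\ forall x, H x <-> simH x (zeroA x).

Definition cond_ii' : Prop := [/\ subalgebra, condA_F & condA_theta].
Definition cond_iii' : Prop := [/\ subalgebra, condA_F, condA_theta & condA_alpha].
Definition cond_iv' : Prop := [/\ subalgebra, condA_F & condB_all].
Definition cond_v' : Prop := [/\ subalgebra, condB_all & condC_F].

End InAlgebra.
End BIT.
End UniversalAlgebra.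

(* Main.v *)
Require Import Defs.
From mathcomp Require Import all_boot zify.
From Stdlib Require Import FunctionalExtensionality.
Set Implicit Arguments. Unset Strict Implicit. Unset Printing Implicit Defensive.

Section Gen.
Variables (F : Type) (ar : F -> nat).

Lemma eval_subst (A : algebra ar) (v : nat -> A) s (t : term ar) :
  eval v (subst s t) = eval (fun j => eval v (s j)) t.
Proof.
elim: t => [j|f ts IH] //=.
by congr (op _); apply: functional_extensionality => i; rewrite IH.
Qed.

Lemma eval_ext_lt (A : algebra ar) k (v w : nat -> A) (t : term ar) :
  vars_lt k t -> (forall j, j < k -> v j = w j) -> eval v t = eval w t.
Proof.
elim: t => [j|f ts IH] /= Hk Hvw; first by apply: Hvw.
by congr (op _); apply: functional_extensionality => i; rewrite (IH i (Hk i)).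
Qed.

Lemma eval_ext (A : algebra ar) (v w : nat -> A) (t : term ar) :
  (forall j, v j = w j) -> eval v t = eval w t.
Proof. by move=> Hvw; have -> : v = w by apply: functional_extensionality. Qed.

Lemma vars_lt_subst k m s (t : term ar) :
  vars_lt k t -> (forall j, j < k -> vars_lt m (s j)) -> vars_lt m (subst s t).
Proof.
elim: t => [j|f ts IH] /= Hk Hs; first by apply: Hs.
by move=> i; apply: IH.
Qed.

Lemma vars_lt_mono k m (t : term ar) : k <= m -> vars_lt k t -> vars_lt m t.
Proof.
move=> km; elim: t => [j|f ts IH] /=; first by move=> jk; apply: leq_trans km.
by move=> Hi i; apply: IH.
Qed.

Lemma closed_eval (A : algebra ar) (v w : nat -> A) (t : term ar) :
  closed_term t -> eval v t = eval w t.
Proof. by move=> ct; apply: (eval_ext_lt ct). Qed.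
Section BITsec.
Variables (E : term ar -> term ar -> Prop) (n : nat) (zero : term ar)
  (alpha : 'I_n -> term ar) (theta : term ar) (hBIT : is_BIT E zero alpha theta).

Lemma n_gt0 : 0 < n. Proof. by case: hBIT. Qed.
Lemma zero_cl : closed_term zero. Proof. by case: hBIT => _ []. Qed.
Lemma alpha_lt i : vars_lt 2 (alpha i). Proof. by case: hBIT => _ []. Qed.
Lemma theta_lt : vars_lt n.+1 theta. Proof. by case: hBIT => _ []. Qed.

Section Model.
Variables (B : algebra ar) (hB : model E B).

Lemma zeroA_eq (x y : B) : zeroA zero x = zeroA zero y.
Proof. exact: closed_eval zero_cl. Qed.

Lemma zeroA_ev (v : nat -> B) (x : B) : eval v zero = zeroA zero x.
Proof. exact: closed_eval zero_cl. Qed.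

Lemma alpha_xx i (x : B) : alphaA alpha i x x = zeroA zero x.
Proof.
case: hBIT => _ [_ _ _ hi _].
have := hi i B hB (fun _ => x); rewrite eval_subst /= /zeroA => <-.
by rewrite /alphaA; apply: eval_ext => j; case: ifP.
Qed.

Lemma theta_alpha (x y : B) : thetaA theta (fun s => alphaA alpha s x y) y = x.
Proof.
case: hBIT => _ [_ _ _ _ ht].
have := ht B hB (fun j => if j == 0 then x else y); rewrite eval_subst /= => e.
rewrite -[RHS]e /thetaA; apply: eval_ext => j.
by case: (insub j).
Qed.

Lemma theta0 (z y : B) : thetaA theta (fun _ : 'I_n => zeroA zero z) y = y.
Proof.
rewrite -{2}(theta_alpha y y); congr thetaA; apply: functional_extensionality => s.
by rewrite alpha_xx (zeroA_eq z y).
Qed.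

End Model.

Section Alg.
Variables (A : algebra ar) (hA : model E A) (H : A -> Prop) (hH : exists h, H h).

Definition Prel (x y : A) := forall i, H (alphaA alpha i x y).
Let i0 : 'I_n := Ordinal n_gt0.

Lemma fact2 (x y : A) : Prel x y -> thetaSet n theta H y x.
Proof. by move=> Pxy; exists (fun s => alphaA alpha s x y) => //; rewrite theta_alpha. Qed.

Lemma compat (hF : condA_F alpha theta H) (t : term ar) (v w : nat -> A) :
  (forall j, Prel (v j) (w j)) -> Prel (eval v t) (eval w t).
Proof.
elim: t => [j|f ts IH] Hvw; first exact: Hvw.
move=> i /=.
have := hF f (fun r => eval w (ts r)) i (fun r s => alphaA alpha s (eval v (ts r)) (eval w (ts r))).
have -> : (fun r => thetaA theta (fun s => alphaA alpha s (eval v (ts r)) (eval w (ts r))) (eval w (ts r)))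
   = (fun r => eval v (ts r)).
  by apply: functional_extensionality => r; rewrite theta_alpha.
apply => r s; exact: IH.
Qed.

Lemma D_of_ii (hth : closed_theta n theta H) (hal : forall i, closed_alpha alpha H i)
  (hAt : condA_theta alpha theta H) (hz : zero_in zero H) (g : 'I_n -> A) (a : A) :
  inH H g -> Prel (thetaA theta g a) a.
Proof.
move=> Hg i.
pose z := zeroA zero a.
pose k := fun (s : 'I_n) (i : 'I_n) => alphaA alpha i (g s) z.
have := hAt (fun r : 'I_n.+1 => oapp (fun _ => z) a (insub (val r) : option 'I_n)) i
   (fun r : 'I_n.+1 => oapp k (fun _ => z) (insub (val r) : option 'I_n)).
rewrite /thetaOp /= (@insubF _ (fun x => x < n) _ n (ltnn n)) /=.
have -> : (fun s : 'I_n => thetaA theta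
     (oapp k (fun=> z) (insub (s : nat) : option 'I_n))
     (oapp (fun=> z) a (insub (s : nat) : option 'I_n))) = g.
  apply: functional_extensionality => s /=; rewrite valK /= /k.
  by rewrite theta_alpha.
have -> : (fun s : 'I_n => oapp (fun=> z) a (insub (s : nat) : option 'I_n)) = fun _ => z.
  by apply: functional_extensionality => s /=; rewrite valK.
rewrite !theta0 //; apply => r s.
case: (insub (r : nat) : option 'I_n) => [u|] /=; last exact: hz.
by apply: hal; [exact: Hg | exact: hz].
Qed.

Lemma zero_of_alpha (hal : forall i, closed_alpha alpha H i) : zero_in zero H.
Proof.
move=> x; case: hH => h0 H0.
by rewrite (zeroA_eq x h0) -(alpha_xx hA i0 h0); apply: hal.
Qed.

Lemma ii_iii : cond_ii alpha theta H -> cond_iii zero alpha theta H.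
Proof.
case=> hth hal hF hAt.
have hz := zero_of_alpha hal.
split => //; split => //.
- by move=> i x Hx; apply: hal => //; apply: hz.
move=> j a i hs Hhs.
have P := (@compat hF (alpha j)
  (fun l => if l == 0 then thetaA theta (hs ord0) (a ord0) else thetaA theta (hs ord_max) (a ord_max))
  (fun l => if l == 0 then a ord0 else a ord_max)).
apply: (P _ i).
by move=> l; case: ifP => _; apply: D_of_ii.
Qed.

Lemma iii_iv : cond_iii zero alpha theta H -> cond_iv zero alpha theta H.
Proof.
case=> hz [hth ha0 hF hAt hAa]; split => //.
move=> i a h h' Hh Hh'.
pose X := alphaA alpha i (thetaA theta h a) (thetaA theta h' a).
have HX : forall k, H (alphaA alpha k X (zeroA zero X)).
  move=> k; have := hAa i (fun _ => a) k (fun r => if r == ord0 then h else h').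
  rewrite /alphaOp eqxx.
  have -> : (ord_max == ord0 :> 'I_2) = false by [].
  rewrite alpha_xx // (zeroA_eq a X); apply => r.
  by case: ifP.
rewrite -/X -(theta_alpha hA X (zeroA zero X)).
by apply: hth => //; apply: hz.
Qed.

Lemma zero_of_B (hB : condB_all alpha theta H) : zero_in zero H.
Proof.
move=> x; case: hH => h0 H0.
rewrite (zeroA_eq x (thetaA theta (fun _ : 'I_n => h0) h0)).
rewrite -(alpha_xx hA i0 (thetaA theta (fun _ => h0) h0)).
by apply: hB.
Qed.

Lemma iv_v : cond_iv zero alpha theta H -> cond_v zero alpha theta H.
Proof.
case=> hth ha0 hF hB; split => //.
have hz := zero_of_B hB.
case: hH => h0 H0.
move=> f a i j h Hh.
have := hF f a i (fun r => if r == j then h else fun _ => zeroA zero h0).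
have -> : (fun r => thetaA theta (if r == j then h else fun _ => zeroA zero h0) (a r))
   = (fun r => if r == j then thetaA theta h (a j) else a r).
  apply: functional_extensionality => r.
  by case: eqP => [->|_] //; rewrite theta0.
move=> X; apply: X => r s; case: (r == j); [exact: Hh | exact: hz].
Qed.

Section Bfacts.
Variables (hB : condB_all alpha theta H).

Lemma thS_B a x : thetaSet n theta H a x <-> Prel x a.
Proof.
have hz := zero_of_B hB.
split; last exact: fact2.
case=> h Hh -> i.
move: (hB i a Hh (fun _ => hz a)).
by rewrite theta0.
Qed.

Lemma sym_B x a : Prel x a -> Prel a x.
Proof.
have hz := zero_of_B hB.
move/thS_B => [h Hh ->] i.
move: (hB i a (fun _ => hz a) Hh).
by rewrite theta0.
Qed.

Lemma trans_B x y z : Prel x y -> Prel y z -> Prel x z.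
Proof.
move=> Pxy /sym_B Pzy.
move/thS_B: Pxy => [h Hh ->]; move/thS_B: Pzy => [h' Hh' ->] i.
exact: hB.
Qed.

Lemma refl_P x : Prel x x.
Proof. by move=> i; rewrite alpha_xx //; apply: zero_of_B. Qed.

Lemma class_B a x : simH n theta H x a <-> thetaSet n theta H a x.
Proof.
split.
  by move=> S; apply/(S x)/thS_B/refl_P.
move/thS_B => Pxa y; split => /thS_B Py; apply/thS_B.
  exact: trans_B Py Pxa.
exact: trans_B Py (sym_B Pxa).
Qed.
End Bfacts.

Lemma v_vi : cond_v zero alpha theta H -> cond_vi zero alpha theta H.
Proof.
case=> hth ha0 hB hC; split => //; first exact: zero_of_B.
by move=> a x; apply: class_B.
Qed.

Notation Q := (simH n theta H).

Lemma vi_vii : cond_vi zero alpha theta H -> cond_vii n zero theta H.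
Proof.
case=> hz hth ha0 hcl hC.
have Qrefl : forall a, Q a a by move=> a x; exact: iff_refl.
have Qsym : forall a b, Q a b -> Q b a by move=> a b S x; apply: iff_sym.
have Qtrans : forall a b c, Q a b -> Q b c -> Q a c.
  by move=> a b c S T x; exact: iff_trans (S x) (T x).
have step : forall f (c : 'I_(ar f) -> A) j y, thetaSet n theta H (c j) y ->
    Q (op (fun r => if r == j then y else c r)) (op c).
  move=> f c j y [h Hh ->]; apply/hcl; apply: fact2 => i.
  exact: hC f c i j h Hh.
split; first split => //.
  move=> f a b Hab.
  have key : forall l, l <= ar f -> Q (op (fun r : 'I_(ar f) => if r < l then b r else a r)) (op a).
    elim => [|l IH] Hl.
      have -> : (fun r : 'I_(ar f) => if r < 0 then b r else a r) = a.
        by apply: functional_extensionality.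
      exact: Qrefl.
    pose j : 'I_(ar f) := Ordinal Hl.
    have -> : (fun r : 'I_(ar f) => if r < l.+1 then b r else a r) =
        (fun r => if r == j then b j else (fun r : 'I_(ar f) => if r < l then b r else a r) r).
      apply: functional_extensionality => r.
      have ej : (r == j) = (r == l :> nat) by [].
      rewrite ej; case: (ltngtP r l) => [lt|gt|eq] /=.
      - by rewrite (ltn_trans lt (ltnSn l)).
      - by rewrite ltnS leqNgt gt.
      - have -> : r = j by apply: val_inj.
        by rewrite /= ltnSn.
    apply: Qtrans (IH (ltnW Hl)); apply: step.
    rewrite /= ltnn; apply/hcl; apply: Qsym; exact: Hab.
  have := key _ (leqnn _).
  have -> : (fun r : 'I_(ar f) => if r < ar f then b r else a r) = b.
    by apply: functional_extensionality => r; rewrite ltn_ord.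
  exact: Qsym.
move=> x; split.
  move=> Hx; apply/hcl; exists (fun i => alphaA alpha i x (zeroA zero x)).
    by move=> i; apply: ha0.
  by rewrite theta_alpha.
by move/hcl => [h Hh ->]; apply: hth.
Qed.

Section VII.
Variable (h7 : cond_vii n zero theta H).

Lemma compatT (t : term ar) (v w : nat -> A) :
  (forall j, Q (v j) (w j)) -> Q (eval v t) (eval w t).
Proof.
case: h7 => [[Qr Qs Qt Qc] hk].
elim: t => [j|f ts IH] Hvw /=; first exact: Hvw.
by apply: Qc => r; apply: IH.
Qed.

Lemma kerQ (x y : A) : H x <-> Q x (zeroA zero y).
Proof. by case: h7 => _ hk; rewrite (zeroA_eq y x). Qed.

Lemma vii_i : ideal E zero H.
Proof.
case: h7 => [[Qr Qs Qt Qc] hk].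
split => // m p t Ht Hid v Hv.
pose z := zeroA zero (v 0).
pose w := fun j => if j < m then v j else if j < m + p then z else v j.
have e1 : Q (eval v t) (eval w t).
  apply: compatT => j; rewrite /w.
  case: ifP => jm; first exact: Qr.
  case: ifP => jp; last exact: Qr.
  by apply/kerQ; apply: Hv; rewrite jp leqNgt jm.
have e2 : eval w t = eval v (subst (fun j => if j < m then Var ar j else zero) t).
  rewrite eval_subst; apply: (eval_ext_lt Ht) => j jp.
  rewrite /w jp; case: ifP => //= _.
  by rewrite (zeroA_ev _ (v 0)).
rewrite e2 (Hid A hA v) (zeroA_ev _ (v 0)) in e1.
exact: (proj2 (kerQ _ _) e1).
Qed.

Lemma QP x y : Q x y -> Prel x y.
Proof.
move=> Qxy i; apply/(kerQ _ y).
rewrite -(alpha_xx hA i y).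
apply: (compatT (alpha i) (v := fun j => if j == 0 then x else y)
   (w := fun j => if j == 0 then y else y)) => j.
case: ifP => _; first exact: Qxy.
by case: h7 => [[Qr _ _ _] _]; apply: Qr.
Qed.

Lemma thetaQ (h : 'I_n -> A) a : inH H h -> Q (thetaA theta h a) a.
Proof.
move=> Hh.
rewrite -{2}(theta0 hA a a).
apply: compatT => j.
case: (insub j : option 'I_n) => [s|] /=; first by apply/kerQ; apply: Hh.
by case: h7 => [[Qr _ _ _] _]; apply: Qr.
Qed.

Lemma vii_ii : cond_ii alpha theta H.
Proof.
have [[Qr Qs Qt Qc] hk] := h7.
split.
- move=> h a Hh Ha; apply/(kerQ _ a).
  apply: Qt (thetaQ a Hh) _; exact/kerQ.
- move=> i x y Hx Hy; apply/(kerQ _ x).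
  rewrite (zeroA_eq x (zeroA zero x)) -(alpha_xx hA i (zeroA zero x)).
  apply: compatT => j; case: ifP => _; exact/kerQ.
- move=> f a i hs Hhs; apply: QP; apply: Qc => r; exact: thetaQ.
move=> a i hs Hhs; apply: QP.
apply: compatT => j; case: (insub j : option 'I_n) => [s|] /=; exact: thetaQ.
Qed.

End VII.

Lemma ideal_use (hi : ideal E zero H) m p t :
  vars_lt (m + p) t ->
  (forall (B : algebra ar), model E B -> forall u : nat -> B,
     eval (fun j => if j < m then u j else zeroA zero (u 0)) t = zeroA zero (u 0)) ->
  forall v, (forall j, m <= j < m + p -> H (v j)) -> H (eval v t).
Proof.
move=> Ht Hsem v Hv; case: hi => _ hi; apply: (hi m p t Ht) => // B hB u.
rewrite eval_subst (zeroA_ev u (u 0)) -(Hsem B hB u); apply: eval_ext => j.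
by case: ifP => //= _; apply: zeroA_ev.
Qed.
Arguments ideal_use : clear implicits.

Lemma i_zero (hi : ideal E zero H) : zero_in zero H.
Proof.
move=> x.
apply: (ideal_use hi 0 0 zero zero_cl) => [B hB u|j /andP [_ jn]].
  exact: zeroA_ev.
by rewrite ltn0 in jn.
Qed.

Lemma i_theta (hi : ideal E zero H) : closed_theta n theta H.
Proof.
move=> h a Hh Ha.
apply: (ideal_use hi 0 n.+1 theta theta_lt) => [B hB u|j /andP [_ jn]].
  rewrite -[RHS](theta0 hB (u 0)) /thetaA; apply: eval_ext => j.
  by case: (insub j : option 'I_n).
by case: (insub j : option 'I_n).
Qed.

Lemma i_alpha (hi : ideal E zero H) i : closed_alpha alpha H i.
Proof.
move=> x y Hx Hy.
apply: (ideal_use hi 0 2 (alpha i) (alpha_lt i)) => [B hB u|j /andP [_ jn]].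
  transitivity (alphaA alpha i (zeroA zero (u 0)) (zeroA zero (u 0))).
    by rewrite /alphaA; apply: eval_ext => j; case: ifP.
  by rewrite alpha_xx //; apply: zeroA_eq.
by case: ifP.
Qed.

Lemma i_B (hi : ideal E zero H) : condB_all alpha theta H.
Proof.
move=> i a h h' Hh Hh'.
pose s1 := fun j => if j < n then Var ar j.+1 else Var ar 0.
pose s2 := fun j => if j < n then Var ar (j + n).+1 else Var ar 0.
pose tau := fun j => if j == 0 then subst s1 theta else subst s2 theta.
pose v := fun j => if j is j'.+1 then
   oapp h (oapp h' a (insub (j' - n) : option 'I_n)) (insub j' : option 'I_n) else a.
have Ht : vars_lt (1 + (n + n)) (subst tau (alpha i)).
  apply: (vars_lt_subst (alpha_lt i)) => j _; rewrite /tau.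
  by case: ifP => _; apply: (vars_lt_subst theta_lt) => l ln; rewrite /s1 /s2;
    case: ifP => /= ?; lia.
have e : eval v (subst tau (alpha i)) = alphaA alpha i (thetaA theta h a) (thetaA theta h' a).
  rewrite eval_subst /alphaA; apply: eval_ext => j; rewrite /tau.
  case: ifP => _; rewrite eval_subst /thetaA; apply: eval_ext => l; rewrite /s1 /s2;
  case: (@insubP _ _ 'I_n l) => [s ls vs|ln] /=; rewrite ?ls ?(negbTE ln) //=.
    by rewrite -vs valK.
  have -> : (insub (l + n) : option 'I_n) = None.
    by apply: insubF; rewrite -vs; lia.
  by rewrite addnK -vs valK.
rewrite -e; apply: (ideal_use hi 1 (n + n) _ Ht) => [B hB u|j /andP [j1 jn]].
  rewrite eval_subst.
  transitivity (alphaA alpha i (u 0) (u 0)); last by rewrite alpha_xx.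
  rewrite /alphaA; apply: eval_ext => j; rewrite /tau.
  case: ifP => _; rewrite eval_subst -[RHS](theta0 hB (u 0) (u 0)) /thetaA;
  apply: eval_ext => l; rewrite /s1 /s2;
  by case: (@insubP _ _ 'I_n l) => [s ls _|ln] /=; rewrite ?ls ?(negbTE ln) //=.
case: j j1 jn => [//|j'] _ jn; rewrite /v.
case: (@insubP _ _ 'I_n j') => [s _ _|jn'] /=; first exact: Hh.
case: (@insubP _ _ 'I_n (j' - n)) => [s _ _|jn''] /=; first exact: Hh'.
exfalso; lia.
Qed.

Lemma i_C (hi : ideal E zero H) : condC_F alpha theta H.
Proof.
move=> f a i j h Hh.
pose s := fun l => if l < n then Var ar (ar f + l) else Var ar j.
pose tau := fun l => if l == 0
  then App (fun r : 'I_(ar f) => if r == j then subst s theta else Var ar r)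
  else App (fun r : 'I_(ar f) => Var ar r).
pose v := fun l => oapp a (oapp h (a j) (insub (l - ar f) : option 'I_n))
                          (insub l : option 'I_(ar f)).
have Ht : vars_lt (ar f + n) (subst tau (alpha i)).
  apply: (vars_lt_subst (alpha_lt i)) => l _; rewrite /tau; case: ifP => _ /= r.
    case: ifP => _ /=; last by have := ltn_ord r; lia.
    apply: (vars_lt_subst theta_lt) => l' _; rewrite /s.
    by case: ifP => /= ?; have := ltn_ord j; lia.
  by have := ltn_ord r; lia.
have e : eval v (subst tau (alpha i)) =
    alphaA alpha i (op (fun r => if r == j then thetaA theta h (a j) else a r)) (op a).
  rewrite eval_subst /alphaA; apply: eval_ext => l; rewrite /tau; case: ifP => _ /=;
    f_equal; apply: functional_extensionality => r; last by rewrite /v valK.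
  case: ifP => _ /=; last by rewrite /v valK.
  rewrite eval_subst /thetaA; apply: eval_ext => l'; rewrite /s.
  case: (@insubP _ _ 'I_n l') => [s' ls vs|ln] /=; rewrite ?ls ?(negbTE ln) /= /v;
    last by rewrite valK.
  have -> : (insub (ar f + l') : option 'I_(ar f)) = None.
    by apply: insubF; lia.
  by rewrite /= addKn -vs valK.
rewrite -e; apply: (ideal_use hi (ar f) n _ Ht) => [B hB u|l /andP [l1 ln]].
  rewrite eval_subst.
  transitivity (alphaA alpha i (op (fun r : 'I_(ar f) => u r)) (op (fun r : 'I_(ar f) => u r))).
    rewrite /alphaA; apply: eval_ext => l; rewrite /tau; case: ifP => _ /=;
      f_equal; apply: functional_extensionality => r; last by rewrite ltn_ord.
    case: (eqVneq r j) => [->|ne]; last by rewrite /= ltn_ord.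
    rewrite eval_subst -[RHS](theta0 hB (u 0) (u j)) /thetaA.
    apply: eval_ext => l'; rewrite /s.
    case: (@insubP _ _ 'I_n l') => [s' ls vs|ln] /=; rewrite ?ls ?(negbTE ln) /=.
      by rewrite ltnNge leq_addr.
    by rewrite ltn_ord.
  by rewrite alpha_xx //; apply: zeroA_eq.
rewrite /v.
have -> : (insub l : option 'I_(ar f)) = None by apply: insubF; lia.
case: (@insubP _ _ 'I_n (l - ar f)) => [s' _ _|jn''] /=; first exact: Hh.
exfalso; lia.
Qed.

Lemma i_sub (hsa : is_semi_abelian E zero alpha theta) (hi : ideal E zero H) :
  subalgebra H.
Proof.
move=> f a Ha; case: hH => h0 _.
have Ht : vars_lt (0 + ar f) (App (fun r : 'I_(ar f) => Var ar r)) by move=> r /=.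
case: hi => _ hi.
suff: H (eval (fun l => oapp a h0 (insub l : option 'I_(ar f))) (App (fun r : 'I_(ar f) => Var ar r))).
  rewrite /=.
  have -> : (fun r : 'I_(ar f) => oapp a h0 (insub (r : nat) : option 'I_(ar f))) = a.
    by apply: functional_extensionality => r; rewrite valK.
  by [].
apply: (hi 0 (ar f) _ Ht).
- case: hsa => _ hc; apply: hc.
  by apply: (vars_lt_subst Ht) => l _ /=; apply: zero_cl.
- move=> l /andP [_ lf].
  case: (@insubP _ _ 'I_(ar f) l) => [s _ _|ln] /=; first exact: Ha.
  by rewrite lf in ln.
Qed.

Lemma sub_term (hs : subalgebra H) k (t : term ar) v :
  vars_lt k t -> (forall j, j < k -> H (v j)) -> H (eval v t).
Proof.
elim: t => [j|f ts IH] /= Ht Hv; first exact: Hv.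
by apply: hs => r; apply: IH.
Qed.

Lemma sub_zero (hs : subalgebra H) : zero_in zero H.
Proof. by move=> x; apply: (sub_term hs zero_cl). Qed.

Lemma sub_theta (hs : subalgebra H) : closed_theta n theta H.
Proof.
move=> h a Hh Ha; apply: (sub_term hs theta_lt) => j _.
by case: (insub j : option 'I_n).
Qed.

Lemma sub_alpha (hs : subalgebra H) i : closed_alpha alpha H i.
Proof.
by move=> x y Hx Hy; apply: (sub_term hs (alpha_lt i)) => j _; case: ifP.
Qed.

Lemma main_alg :
  [<-> ideal E zero H;
       cond_ii alpha theta H;
       cond_iii zero alpha theta H;
       cond_iv zero alpha theta H;
       cond_v zero alpha theta H;
       cond_vi zero alpha theta H;
       cond_vii n zero theta H]
  /\ (is_semi_abelian E zero alpha theta ->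
      [<-> ideal E zero H;
           cond_ii' alpha theta H;
           cond_iii' alpha theta H;
           cond_iv' alpha theta H;
           cond_v' alpha theta H;
           cond_vi zero alpha theta H;
           cond_vii n zero theta H]).
Proof.
have i_v : ideal E zero H -> cond_v zero alpha theta H.
  move=> hi; split; [exact: i_theta | | exact: i_B | exact: i_C].
  by move=> i x Hx; apply: i_alpha => //; apply: i_zero.
have i_ii : ideal E zero H -> cond_ii alpha theta H.
  by move=> hi; apply: vii_ii; apply: vi_vii; apply: v_vi; apply: i_v.
have ii_i : cond_ii alpha theta H -> ideal E zero H.
  by move=> h; apply: vii_i; apply: vi_vii; apply: v_vi; apply: iv_v; apply: iii_iv; apply: ii_iii.
have sub_ii : forall hs : subalgebra H, forall (hF : condA_F alpha theta H)
   (hAt : condA_theta alpha theta H), cond_ii alpha theta H.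
  by move=> hs hF hAt; split => //; [apply: sub_theta | apply: sub_alpha].
split.
  tfae.
  - exact: i_ii.
  - exact: ii_iii.
  - exact: iii_iv.
  - exact: iv_v.
  - exact: v_vi.
  - exact: vi_vii.
  - exact: vii_i.
move=> hsa; tfae.
- move=> hi; case: (i_ii hi) => _ _ hF hAt; split => //; exact: i_sub.
- case=> hs hF hAt; have hi := ii_i (sub_ii hs hF hAt).
  case: (ii_iii (i_ii hi)) => _ [_ _ _ _ hAa]; by split.
- case=> hs hF hAt hAa.
  have h2 := sub_ii hs hF hAt; have hi := ii_i h2.
  by case: (iii_iv (ii_iii h2)) => _ _ _ hB; split.
- case=> hs hF hB.
  have : cond_iv zero alpha theta H.
    split => //; [exact: sub_theta | ].
    by move=> i x Hx; apply: sub_alpha => //; apply: sub_zero.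
  by move/iv_v => [_ _ _ hC]; split.
- case=> hs hB hC; apply: v_vi; split => //; [exact: sub_theta | ].
  by move=> i x Hx; apply: sub_alpha => //; apply: sub_zero.
- exact: vi_vii.
- exact: vii_i.
Qed.

End Alg.
End BITsec.
End Gen.

Unset Implicit Arguments.
Set Strict Implicit.

Theorem theorem2p5 (F : Type) (ar : F -> nat) (E : term ar -> term ar -> Prop)
    (n : nat) (zero : term ar) (alpha : 'I_n -> term ar) (theta : term ar)
    (hBIT : is_BIT E zero alpha theta)
    (A : algebra ar) (hA : model E A) (H : A -> Prop) (hH : exists h, H h) :
  [<-> ideal E zero H;
       cond_ii alpha theta H;
       cond_iii zero alpha theta H;
       cond_iv zero alpha theta H;
       cond_v zero alpha theta H;
       cond_vi zero alpha theta H;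
       cond_vii n zero theta H]
  /\ (is_semi_abelian E zero alpha theta ->
      [<-> ideal E zero H;
           cond_ii' alpha theta H;
           cond_iii' alpha theta H;
           cond_iv' alpha theta H;
           cond_v' alpha theta H;
           cond_vi zero alpha theta H;
           cond_vii n zero theta H]).
Proof. exact: main_alg. Qed.
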